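(* Let $\mathcal{P}_1,\mathcal{P}_2\subseteq\mathbb{R}^n$ be non-empty not necessarily closed (NNC) convex polyhedra. Suppose there exist a linear constraint $\beta=(\langle\mathbf{a},\mathbf{x}\rangle\bowtie b)$ with $\mathbf{a}\neq\mathbf{0}$ and $\bowtie\in\{<,\le\}$, and a vector $\mathbf{p}\in\mathbb{R}^n$ such that: (1) $\mathbf{p}$ saturates $\beta$, i.e., $\langle\mathbf{a},\mathbf{p}\rangle=b$; (2) every point of $\mathcal{P}_1$ satisfies $\beta$, while some point of $\mathcal{P}_2$ violates $\beta$; (3) $\mathbf{p}\in\mathbb{C}(\mathcal{P}_1)\setminus\mathbb{C}(\mathcal{P}_2)$. Then $\mathcal{P}_1\uplus\mathcal{P}_2\neq\mathcal{P}_1\cup\mathcal{P}_2$.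
   Context: An NNC convex polyhedron in $\mathbb{R}^n$ is the set of solutions of a finite system of strict ($\langle\mathbf{a},\mathbf{x}\rangle<b$) and non-strict ($\langle\mathbf{a},\mathbf{x}\rangle\le b$) linear inequalities with $\mathbf{a}\neq\mathbf{0}$. $\mathbb{C}(S)$ denotes the topological closure of $S\subseteq\mathbb{R}^n$. $\mathcal{P}_1\uplus\mathcal{P}_2$ denotes the smallest NNC polyhedron containing $\mathcal{P}_1\cup\mathcal{P}_2$ (the NNC convex polyhedral hull). *)

(* Defs.v *)
From Stdlib Require Lists.List.
From HB Require Import structures.
From mathcomp Require Import all_boot all_order all_algebra.
From mathcomp Require Import all_classical all_reals all_analysis.
Set Implicit Arguments. Unset Strict Implicit. Unset Printing Implicit Defensive.
Import Order.TTheory GRing.Theory Num.Theory.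
Import numFieldTopology.Exports numFieldNormedType.Exports.
Local Open Scope ring_scope.
Local Open Scope classical_set_scope.

Definition dotv (R : realType) (n : nat) (a x : 'rV[R]_n) : R :=
  \sum_(i < n) a ord0 i * x ord0 i.

(* a linear constraint <a,x> ⋈ b, with ⋈ = '<' if strict = true, '<=' otherwise *)
Record lcons (R : realType) (n : nat) := LCons {
  lc_a : 'rV[R]_n; lc_b : R; lc_strict : bool }.

Definition sat (R : realType) (n : nat) (c : lcons R n) (x : 'rV[R]_n) : Prop :=
  if lc_strict c then dotv (lc_a c) x < lc_b c else dotv (lc_a c) x <= lc_b c.

Definition saturates (R : realType) (n : nat) (p : 'rV[R]_n) (c : lcons R n) : Prop :=
  dotv (lc_a c) p = lc_b c.

Definition nnc_poly (R : realType) (n : nat) (P : set 'rV[R]_n) : Prop :=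
  exists cs : seq (lcons R n),
    (forall c, Stdlib.Lists.List.In c cs -> lc_a c != 0) /\
    P = [set x | forall c, Stdlib.Lists.List.In c cs -> sat c x].

Definition nnc_hull (R : realType) (n : nat) (P1 P2 : set 'rV[R]_n) : set 'rV[R]_n :=
  [set x | forall Q : set 'rV[R]_n, nnc_poly Q -> P1 `|` P2 `<=` Q -> Q x].

(* Main.v *)
Require Import Defs.
From HB Require Import structures.
From mathcomp Require Import all_boot all_order all_algebra.
From mathcomp Require Import all_classical all_reals all_analysis.
From mathcomp Require Import ring lra.
Import Order.TTheory GRing.Theory Num.Theory.
Import numFieldTopology.Exports numFieldNormedType.Exports.
Local Open Scope ring_scope.
Local Open Scope classical_set_scope.

Lemma sum_cont (R : realType) (T : topologicalType) (I : Type) (r : seq I)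
  (f : I -> T -> R) : (forall i, continuous (f i)) ->
  continuous (fun x => \sum_(i <- r) f i x).
Proof.
move=> fc; elim: r => [|j r IH].
  under eq_fun do rewrite big_nil; exact: cst_continuous.
under eq_fun do rewrite big_cons.
move=> x; exact: (@continuousD _ _ _ (f j) (fun x => \sum_(i <- r) f i x) x (fc j x) (IH x)).
Qed.

Lemma dcont (R : realType) n (c : 'rV[R]_n) :
  continuous (fun x : 'rV[R]_n => \sum_(i < n) c ord0 i * x ord0 i).
Proof.
apply: sum_cont => i x.
rewrite /continuous_at.
have := @cvgM R _ (nbhs x) _ (fun=> c ord0 i) (fun x : 'rV[R]_n => x ord0 i) _ _ (cvg_cst _) (@coord_continuous R 1 n ord0 i x).
move=> H; apply: H; exact: nbhs_filter.
Qed.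

Lemma sat_closure (R : realType) n (c : lcons R n) (A : set 'rV[R]_n) p :
  (forall x, A x -> sat c x) -> closure A p -> dotv (lc_a c) p <= lc_b c.
Proof.
move=> hA clp.
pose S := (dotv (lc_a c)) @^-1` [set y : R | y <= lc_b c].
have cS : closed S.
  apply: preimage_closed; last exact: closed_le.
  move=> x _; exact: dcont.
have AS : A `<=` S.
  move=> x /hA; rewrite /sat /S /=; case: (lc_strict c) => //; exact: ltW.
have := closureS AS clp.
by rewrite -(closure_id S).1.
Qed.

Lemma dotv_comb (R : realType) n (a p q : 'rV[R]_n) t :
  dotv a ((1 - t) *: p + t *: q) = (1 - t) * dotv a p + t * dotv a q.
Proof.
rewrite /dotv !mulr_sumr -big_split; apply: eq_bigr => i _.
rewrite !mxE /=; ring.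
Qed.

Theorem lemma2 (R : realType) (n : nat) (P1 P2 : set 'rV[R]_n)
  (beta : lcons R n) (p : 'rV[R]_n) :
  nnc_poly P1 -> nnc_poly P2 -> P1 !=set0 -> P2 !=set0 ->
  lc_a beta != 0 ->
  saturates p beta ->
  (forall x, P1 x -> sat beta x) ->
  (exists x, P2 x /\ ~ sat beta x) ->
  closure P1 p -> ~ closure P2 p ->
  nnc_hull P1 P2 <> P1 `|` P2.
Proof.
move=> _ _ _ _ _ hsat hP1 [q [P2q nq]] clp nclp H.
have [B [nB hB]] : exists B, nbhs p B /\ forall x, B x -> ~ P2 x.
  apply: contrapT => H1; apply: nclp => B nB; apply: contrapT => H2.
  apply: H1; exists B; split => // x Bx P2x; apply: H2; by exists x.
move/nbhs_ballP: nB => [e /= e0 beB].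
pose d := `|p - q|.
have d0 : 0 <= d by exact: normr_ge0.
pose t := e / (e + d).
have ed0 : 0 < e + d by lra.
have t0 : 0 < t by apply: divr_gt0.
have t1 : t <= 1 by rewrite /t ler_pdivrMr // mul1r; lra.
have td : t * d < e.
  rewrite /t mulrAC ltr_pdivrMr // mulrDr.
  have ee : 0 < e * e by apply: mulr_gt0.
  lra.
pose z := (1 - t) *: p + t *: q.
have Bz : B z.
  apply: beB; rewrite -ball_normE /= /z.
  have -> : p - ((1 - t) *: p + t *: q) = t *: (p - q).
    rewrite scalerBl scale1r scalerBr opprD opprB addrA.
    by rewrite [p + _]addrCA subrr addr0.
  by rewrite normrZ gtr0_norm.
have hz : nnc_hull P1 P2 z.
  move=> Q [cs [_ ->]] sub c inc.
  have h1 : forall x, P1 x -> sat c x by move=> x P1x; apply: (sub x (or_introl P1x)).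
  have hp := @sat_closure _ _ c P1 p h1 clp.
  have hq : sat c q by apply: (sub q (or_intror P2q)).
  move: hq; rewrite /sat /z dotv_comb.
  have hp' : (1 - t) * dotv (lc_a c) p <= (1 - t) * lc_b c.
    by apply: ler_wpM2l => //; lra.
  case: (lc_strict c) => hq.
    have : t * dotv (lc_a c) q < t * lc_b c by rewrite ltr_pM2l.
    lra.
  have : t * dotv (lc_a c) q <= t * lc_b c by rewrite ler_pM2l.
  lra.
have : (P1 `|` P2) z by rewrite -H.
case => [/hP1|]; last exact: hB.
move: nq; rewrite /sat /z dotv_comb.
move: hsat; rewrite /saturates => ->.
case: (lc_strict beta) => nq hz2.
  have : lc_b beta <= dotv (lc_a beta) q by rewrite leNgt; apply/negP.
  move=> hb; have : t * lc_b beta <= t * dotv (lc_a beta) q by rewrite ler_pM2l.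
  lra.
have : lc_b beta < dotv (lc_a beta) q by rewrite ltNge; apply/negP.
move=> hb; have : t * lc_b beta < t * dotv (lc_a beta) q by rewrite ltr_pM2l.
lra.
Qed.
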